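(* Let $\omega_n>0$, $0\le\zeta<1$, $\omega_0=\omega_n\sqrt{1-\zeta^2}$, $T>0$, $s_0\in\mathbb{R}$, and let $N_\tau=\exp\!\left(\tau\begin{pmatrix}0&1\\-\omega_n^2&-2\zeta\omega_n\end{pmatrix}\right)$. Put $N_1=N_{s_0}$, $N_2=N_{T-s_0}$, and for $\alpha\in\mathbb{R}$ let $$J=N_2\begin{pmatrix}1&0\\ \alpha&1\end{pmatrix}N_1.$$ Then $$\operatorname{Tr}(J)=\operatorname{Tr}(N_2N_1)+\alpha\, e^{-\zeta\omega_n T}\,\frac{\sin(\omega_0 T)}{\omega_0},\qquad \det J=\det N_2\det N_1=e^{-2\zeta\omega_n T}.$$ Consequently, if $T=2\pi/\omega_f$ and $\omega_0\neq m\omega_f/2$ for all integers $m$, then the coefficient of $\alpha$ in $\operatorname{Tr}(J)$ is nonzero; in particular, when $\alpha=\dfrac{w_2h_1\sqrt{2a^*}}{2\sqrt{-H_{\min}}}$ with $w_2h_1\neq 0$, $a^*>0$, the trace of $J$ diverges like $(-H_{\min})^{-1/2}$ as $H_{\min}\to 0^-$, while the determinant stays constant.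
   Context: Setting: a forced impact oscillator $\ddot u+2\zeta\omega_n\dot u+\omega_n^2 u=g(t)$ for $u<\sigma$, with $g$ of period $T$ (angular frequency $\omega_f$), hard wall at $u=\sigma$ with $H(u,v)=\sigma-u$, $h_1=\partial H/\partial u$, reset map $\mathbf x\mapsto\mathbf x+W\,v(\mathbf x)$ with $W=(0\;\;w_2)^T$, $a^*>0$ the normal acceleration at the grazing point, and $H_{\min}<0$ the minimum of $H$ along the unconstrained trajectory near a grazing periodic orbit. The orbit takes time $s_0$ from the stroboscopic Poincaré section to the wall and $T-s_0$ back; $J$ is the Jacobian of the stroboscopic map near grazing, with $\begin{pmatrix}1&0\\ \alpha&1\end{pmatrix}$ the Jacobian of the zero-time discontinuity mapping. *)

(* Defs.v *)
From Stdlib Require Import Reals Lra ZArith.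
Open Scope R_scope.

Record M2 := mkM2 { m11 : R; m12 : R; m21 : R; m22 : R }.

Definition M2id : M2 := mkM2 1 0 0 1.

Definition M2add (A B : M2) : M2 :=
  mkM2 (m11 A + m11 B) (m12 A + m12 B) (m21 A + m21 B) (m22 A + m22 B).

Definition M2scal (c : R) (A : M2) : M2 :=
  mkM2 (c * m11 A) (c * m12 A) (c * m21 A) (c * m22 A).

Definition M2mul (A B : M2) : M2 :=
  mkM2 (m11 A * m11 B + m12 A * m21 B) (m11 A * m12 B + m12 A * m22 B)
       (m21 A * m11 B + m22 A * m21 B) (m21 A * m12 B + m22 A * m22 B).

Fixpoint M2pow (A : M2) (k : nat) : M2 :=
  match k with
  | O => M2id
  | S k' => M2mul A (M2pow A k')
  end.

Definition M2tr (A : M2) : R := m11 A + m22 A.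
Definition M2det (A : M2) : R := m11 A * m22 A - m12 A * m21 A.

Fixpoint M2expSum (A : M2) (n : nat) : M2 :=
  match n with
  | O => M2id
  | S n' => M2add (M2expSum A n') (M2scal (/ INR (fact (S n'))) (M2pow A (S n')))
  end.

Definition is_M2exp (A E : M2) : Prop :=
  Un_cv (fun n => m11 (M2expSum A n)) (m11 E) /\
  Un_cv (fun n => m12 (M2expSum A n)) (m12 E) /\
  Un_cv (fun n => m21 (M2expSum A n)) (m21 E) /\
  Un_cv (fun n => m22 (M2expSum A n)) (m22 E).

Definition sysA (wn zeta : R) : M2 := mkM2 0 1 (- wn ^ 2) (- 2 * zeta * wn).

(* Jacobian of the zero-time discontinuity mapping ( 1 0 ; alpha 1 ). *)
Definition Dmat (alpha : R) : M2 := mkM2 1 0 alpha 1.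

Definition Jmat (N1 N2 : M2) (alpha : R) : M2 := M2mul N2 (M2mul (Dmat alpha) N1).

(* Main.v *)
Require Import Defs.
From Stdlib Require Import Reals Lra Lia ZArith.
From Coquelicot Require Import Coquelicot.
Open Scope R_scope.

Fixpoint pq (W C : R) (k : nat) : R * R :=
  match k with
  | O => (1, 0)
  | S k' => let r := pq W C k' in (- W * snd r, fst r - C * snd r)
  end.
Definition pp W C k := fst (pq W C k).
Definition qq W C k := snd (pq W C k).
Lemma pp_S W C k : pp W C (S k) = - W * qq W C k. Proof. reflexivity. Qed.
Lemma qq_S W C k : qq W C (S k) = pp W C k - C * qq W C k. Proof. reflexivity. Qed.

Lemma M2pow_sys wn zeta k :
  M2pow (sysA wn zeta) k =
  mkM2 (pp (wn^2) (2*zeta*wn) k) (qq (wn^2) (2*zeta*wn) k)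
       (- wn^2 * qq (wn^2) (2*zeta*wn) k)
       (pp (wn^2) (2*zeta*wn) k - 2*zeta*wn * qq (wn^2) (2*zeta*wn) k).
Proof.
  induction k as [|k IH].
  - simpl. unfold M2id, pp, qq. simpl. f_equal; ring.
  - change (M2pow (sysA wn zeta) (S k)) with (M2mul (sysA wn zeta) (M2pow (sysA wn zeta) k)).
    rewrite IH, pp_S, qq_S. unfold M2mul, sysA; simpl. f_equal; ring.
Qed.

Lemma M2pow_scal s B k : M2pow (M2scal s B) k = M2scal (s ^ k) (M2pow B k).
Proof.
  induction k as [|k IH].
  - simpl. unfold M2id, M2scal; simpl. f_equal; ring.
  - change (M2pow (M2scal s B) (S k)) with (M2mul (M2scal s B) (M2pow (M2scal s B) k)).
    change (M2pow B (S k)) with (M2mul B (M2pow B k)).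
    rewrite IH. destruct (M2pow B k), B. unfold M2mul, M2scal; simpl. f_equal; ring.
Qed.

Definition SS (x : nat -> R) (s : R) (n : nat) :=
  sum_f_R0 (fun k => x k / INR (fact k) * s ^ k) n.

Lemma expsum_form wn zeta s n :
  let W := wn^2 in let C := 2*zeta*wn in
  M2expSum (M2scal s (sysA wn zeta)) n =
  mkM2 (SS (pp W C) s n) (SS (qq W C) s n) (- W * SS (qq W C) s n)
       (SS (pp W C) s n - C * SS (qq W C) s n).
Proof.
  intros W C. induction n as [|n IH].
  - unfold SS; simpl. unfold M2id, pp, qq; simpl. f_equal; try (unfold W, C); try lra.
  - change (M2expSum (M2scal s (sysA wn zeta)) (S n)) with
      (M2add (M2expSum (M2scal s (sysA wn zeta)) n)
         (M2scal (/ INR (fact (S n))) (M2pow (M2scal s (sysA wn zeta)) (S n)))).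
    rewrite IH, M2pow_scal, M2pow_sys. unfold SS. rewrite !tech5.
    unfold M2add, M2scal; cbn [m11 m12 m21 m22]. unfold W, C. f_equal; unfold Rdiv; ring.
Qed.

Lemma SS_cv x s :
  ex_pseries (fun k => x k / INR (fact k)) s ->
  Un_cv (SS x s) (PSeries (fun k => x k / INR (fact k)) s).
Proof.
  intro H. apply PSeries_correct in H. unfold is_pseries in H.
  apply is_series_Reals in H.
  intros eps Heps. destruct (H eps Heps) as [N HN]. exists N. intros n Hn.
  specialize (HN n Hn). unfold SS.
  replace (sum_f_R0 (fun k => x k / INR (fact k) * s ^ k) n) with
    (sum_f_R0 (fun k => scal (pow_n s k) (x k / INR (fact k))) n); [exact HN|].
  apply sum_eq. intros i _. rewrite pow_n_pow. unfold scal; simpl. unfold mult; simpl. ring.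
Qed.

Lemma pq_bound W C k :
  Rabs (pp W C k) <= (1 + Rabs W + Rabs C) ^ k /\
  Rabs (qq W C k) <= (1 + Rabs W + Rabs C) ^ k.
Proof.
  set (Kb := 1 + Rabs W + Rabs C).
  assert (HW := Rabs_pos W). assert (HC := Rabs_pos C).
  induction k as [|k [IHp IHq]].
  - unfold pp, qq; simpl. rewrite Rabs_R1, Rabs_R0. lra.
  - rewrite pp_S, qq_S. simpl.
    assert (0 <= Kb ^ k) by (apply pow_le; unfold Kb; lra).
    split.
    + rewrite Rabs_mult, Rabs_Ropp.
      apply Rle_trans with (Rabs W * Kb ^ k). apply Rmult_le_compat_l; lra.
      apply Rmult_le_compat_r; [lra | unfold Kb; lra].
    + eapply Rle_trans. apply Rabs_triang. rewrite Rabs_Ropp, Rabs_mult.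
      assert (Rabs C * Rabs (qq W C k) <= Rabs C * Kb ^ k) by (apply Rmult_le_compat_l; lra).
      assert ((1 + Rabs C) * Kb^k <= Kb * Kb^k) by (apply Rmult_le_compat_r; [lra | unfold Kb; lra]).
      lra.
Qed.

Lemma term_le_sum (f : nat -> R) n : (forall k, 0 <= f k) -> f n <= sum_f_R0 f n.
Proof.
  intro H. destruct n. simpl; lra. rewrite tech5.
  assert (0 <= sum_f_R0 f n) by (apply cond_pos_sum; auto). lra.
Qed.

Lemma rad_inf (x : nat -> R) Kb :
  0 <= Kb -> (forall k, Rabs (x k) <= Kb ^ k) ->
  forall y, Rbar_lt (Rabs y) (CV_radius (fun k => x k / INR (fact k))).
Proof.
  intros HK Hx y.
  destruct (CV_radius_bounded (fun k => x k / INR (fact k))) as [Hub _].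
  set (r := Rabs y + 1).
  assert (Hr : 0 <= r) by (unfold r; generalize (Rabs_pos y); lra).
  assert (E : exists M, forall n, Rabs (x n / INR (fact n) * r ^ n) <= M).
  { exists (exp (Kb * r)). intro n.
    assert (Hf : 0 < INR (fact n)) by (apply lt_0_INR, lt_O_fact).
    rewrite Rabs_mult, Rabs_div by lra. rewrite (Rabs_right (INR (fact n))) by lra.
    rewrite (Rabs_right (r ^ n)) by (apply Rle_ge, pow_le; lra).
    apply Rle_trans with ((Kb * r) ^ n / INR (fact n)).
    - rewrite Rpow_mult_distr. unfold Rdiv.
      rewrite (Rmult_comm (Kb ^ n)), Rmult_assoc, Rmult_assoc.
      rewrite (Rmult_comm (r ^ n)), <- (Rmult_assoc (Rabs (x n))).
      apply Rmult_le_compat_r. apply pow_le; lra.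
      apply Rmult_le_compat_r. left; apply Rinv_0_lt_compat; lra. apply Hx.
    - eapply Rle_trans; [| apply (exp_ge_taylor (Kb * r) n)].
      apply (term_le_sum (fun k => (Kb * r) ^ k / INR (fact k))).
      intro k. apply Rmult_le_pos. apply pow_le, Rmult_le_pos; lra.
      left; apply Rinv_0_lt_compat, lt_0_INR, lt_O_fact.
      apply Rmult_le_pos; lra. }
  specialize (Hub r E).
  destruct (CV_radius (fun k => x k / INR (fact k))); simpl in *; unfold r in *; try lra; auto.
Qed.

Definition ap W C k := pp W C k / INR (fact k).
Definition aq W C k := qq W C k / INR (fact k).
Definition Pf W C x := PSeries (ap W C) x.
Definition Qf W C x := PSeries (aq W C) x.

Lemma rad_p W C y : Rbar_lt (Rabs y) (CV_radius (ap W C)).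
Proof.
  apply (rad_inf (pp W C) (1 + Rabs W + Rabs C)).
  generalize (Rabs_pos W) (Rabs_pos C); lra. intro k; apply pq_bound.
Qed.
Lemma rad_q W C y : Rbar_lt (Rabs y) (CV_radius (aq W C)).
Proof.
  apply (rad_inf (qq W C) (1 + Rabs W + Rabs C)).
  generalize (Rabs_pos W) (Rabs_pos C); lra. intro k; apply pq_bound.
Qed.

Lemma fact_div x n : INR (S n) * (x / INR (fact (S n))) = x / INR (fact n).
Proof.
  rewrite fact_simpl, mult_INR. field. split. apply INR_fact_neq_0.
  apply not_0_INR; lia.
Qed.

Lemma der_P W C x : is_derive (Pf W C) x (- W * Qf W C x).
Proof.
  unfold Pf. eapply is_derive_ext; [intro t; reflexivity|].
  replace (- W * Qf W C x) with (PSeries (PS_derive (ap W C)) x).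
  apply is_derive_PSeries, rad_p.
  unfold Qf. rewrite <- PSeries_scal. apply PSeries_ext. intro n.
  unfold PS_derive, PS_scal, ap, aq. rewrite fact_div, pp_S.
  unfold scal; simpl; unfold mult; simpl. field. apply INR_fact_neq_0.
Qed.

Lemma der_Q W C x : is_derive (Qf W C) x (Pf W C x - C * Qf W C x).
Proof.
  replace (Pf W C x - C * Qf W C x) with (PSeries (PS_derive (aq W C)) x).
  unfold Qf. apply is_derive_PSeries, rad_q.
  unfold Pf, Qf.
  transitivity (PSeries (PS_plus (ap W C) (PS_scal (-C) (aq W C))) x).
  apply PSeries_ext. intro n.
  unfold PS_derive, PS_plus, PS_scal, ap, aq. rewrite fact_div, qq_S.
  unfold scal, plus; simpl; unfold mult, plus; simpl. field. apply INR_fact_neq_0.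
  rewrite PSeries_plus, PSeries_scal. ring.
  apply CV_radius_inside, rad_p.
  apply ex_pseries_scal. apply Rmult_comm. apply CV_radius_inside, rad_q.
Qed.

Lemma Pf0 W C : Pf W C 0 = 1.
Proof.
  unfold Pf. rewrite (PSeries_decr_1 (ap W C) 0). unfold ap, pp; simpl. field.
  apply CV_radius_inside, rad_p.
Qed.
Lemma Qf0 W C : Qf W C 0 = 0.
Proof.
  unfold Qf. rewrite (PSeries_decr_1 (aq W C) 0). unfold aq, qq; simpl. field.
  apply CV_radius_inside, rad_q.
Qed.

Lemma ode_uniq W C (u v : R -> R) :
  (forall x, is_derive u x (- W * v x)) ->
  (forall x, is_derive v x (u x - C * v x)) ->
  u 0 = 0 -> v 0 = 0 -> forall x, u x = 0 /\ v x = 0.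
Proof.
  intros Hu Hv u0 v0.
  set (K := (1 - W)^2 + C^2 + 2).
  set (dV := fun x => 2 * u x * (- W * v x) + 2 * v x * (u x - C * v x)).
  assert (HK1 : forall x, dV x <= K * (u x ^ 2 + v x ^ 2)).
  { intro x. unfold dV, K.
    assert (E : ((1 - W)^2 + C^2 + 2) * (u x ^ 2 + v x ^ 2) - (2 * u x * (- W * v x) + 2 * v x * (u x - C * v x))
      = ((1-W) * u x - v x)^2 + ((C+1) * v x)^2 + ((1-W) * v x)^2 + (C^2+2) * (u x)^2) by ring.
    assert (0 <= ((1-W) * u x - v x)^2) by apply pow2_ge_0.
    assert (0 <= ((C+1) * v x)^2) by apply pow2_ge_0.
    assert (0 <= ((1-W) * v x)^2) by apply pow2_ge_0.
    assert (0 <= (C^2+2) * (u x)^2) by (apply Rmult_le_pos; [generalize (pow2_ge_0 C); lra| apply pow2_ge_0]).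
    lra. }
  assert (HK2 : forall x, - dV x <= K * (u x ^ 2 + v x ^ 2)).
  { intro x. unfold dV, K.
    assert (E : ((1 - W)^2 + C^2 + 2) * (u x ^ 2 + v x ^ 2) + (2 * u x * (- W * v x) + 2 * v x * (u x - C * v x))
      = ((1-W) * u x + v x)^2 + ((C-1) * v x)^2 + ((1-W) * v x)^2 + (C^2+2) * (u x)^2) by ring.
    assert (0 <= ((1-W) * u x + v x)^2) by apply pow2_ge_0.
    assert (0 <= ((C-1) * v x)^2) by apply pow2_ge_0.
    assert (0 <= ((1-W) * v x)^2) by apply pow2_ge_0.
    assert (0 <= (C^2+2) * (u x)^2) by (apply Rmult_le_pos; [generalize (pow2_ge_0 C); lra| apply pow2_ge_0]).
    lra. }
  assert (Dv : forall sg x, is_derive (fun t => (u t ^ 2 + v t ^ 2) * exp (sg * K * t)) x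
                     ((dV x + sg * K * (u x ^ 2 + v x ^ 2)) * exp (sg * K * x))).
  { intros sg x. auto_derive.
    - split. exists (- W * v x); apply Hu. split. exists (u x - C * v x); apply Hv. auto.
    - replace (Derive (fun x0 => u x0) x) with (- W * v x) by (symmetry; apply is_derive_unique; apply Hu).
      replace (Derive (fun x0 => v x0) x) with (u x - C * v x) by (symmetry; apply is_derive_unique; apply Hv).
      unfold dV. simpl. ring. }
  intro x.
  assert (HV : u x ^ 2 + v x ^ 2 = 0).
  { destruct (Rle_or_lt 0 x) as [Hx|Hx].
    - destruct (MVT_cor4 _ _ 0 (Rabs x) (fun c _ => Dv (-1) c) x) as [c [Hc _]].
      right. f_equal. ring.
      rewrite u0, v0 in Hc.
      assert (H1 := HK1 c). assert (E1 := exp_pos (-1 * K * c)).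
      assert (E2 := exp_pos (-1 * K * x)).
      assert ((dV c + -1 * K * (u c ^ 2 + v c ^ 2)) * exp (-1 * K * c) * (x - 0) <= 0).
      { apply Rmult_le_0_r; [|lra]. apply Rmult_le_0_r; lra. }
      assert (0 <= u x ^ 2 + v x ^ 2) by (generalize (pow2_ge_0 (u x)) (pow2_ge_0 (v x)); lra).
      assert ((u x ^ 2 + v x ^ 2) * exp (-1 * K * x) <= 0) by lra.
      nra.
    - destruct (MVT_cor4 _ _ 0 (Rabs x) (fun c _ => Dv 1 c) x) as [c [Hc _]].
      right. f_equal. ring.
      rewrite u0, v0 in Hc.
      assert (H1 := HK2 c). assert (E1 := exp_pos (1 * K * c)).
      assert (E2 := exp_pos (1 * K * x)).
      assert ((dV c + 1 * K * (u c ^ 2 + v c ^ 2)) * exp (1 * K * c) * (x - 0) <= 0).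
      { apply Rmult_le_0_l; [|lra]. apply Rmult_le_pos; lra. }
      assert (0 <= u x ^ 2 + v x ^ 2) by (generalize (pow2_ge_0 (u x)) (pow2_ge_0 (v x)); lra).
      assert ((u x ^ 2 + v x ^ 2) * exp (1 * K * x) <= 0) by lra.
      nra. }
  generalize (pow2_ge_0 (u x)) (pow2_ge_0 (v x)). intros. split; nra.
Qed.

Definition Pc a b x := exp (a * x) * (cos (b * x) - a / b * sin (b * x)).
Definition Qc a b x := exp (a * x) * sin (b * x) / b.

Lemma closed_gen a b W C : b <> 0 -> W = a^2 + b^2 -> C = -2 * a ->
  forall x, Pf W C x = Pc a b x /\ Qf W C x = Qc a b x.
Proof.
  intros Hb HW HC x.
  assert (dPc : forall t, is_derive (Pc a b) t (- W * Qc a b t)).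
  { intro t. unfold Pc, Qc. auto_derive. auto. rewrite HW. field. auto. }
  assert (dQc : forall t, is_derive (Qc a b) t (Pc a b t - C * Qc a b t)).
  { intro t. unfold Pc, Qc. auto_derive. auto. rewrite HC. field. auto. }
  destruct (ode_uniq W C (fun t => Pf W C t - Pc a b t) (fun t => Qf W C t - Qc a b t))
    with (x := x) as [H1 H2].
  - intro t. eapply is_derive_ext; [intro; reflexivity|].
    replace (- W * (Qf W C t - Qc a b t)) with (- W * Qf W C t - (- W * Qc a b t)) by ring.
    apply (is_derive_minus (Pf W C) (Pc a b)). apply der_P. apply dPc.
  - intro t.
    replace (Pf W C t - Pc a b t - C * (Qf W C t - Qc a b t)) with
      ((Pf W C t - C * Qf W C t) - (Pc a b t - C * Qc a b t)) by ring.
    apply (is_derive_minus (Qf W C) (Qc a b)). apply der_Q. apply dQc.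
  - rewrite Pf0. unfold Pc. rewrite Rmult_0_r, exp_0, Rmult_0_r, cos_0, sin_0. ring.
  - rewrite Qf0. unfold Qc. rewrite Rmult_0_r, exp_0, Rmult_0_r, sin_0. field. auto.
  - split; lra.
Qed.

Lemma N_form wn zeta s N :
  is_M2exp (M2scal s (sysA wn zeta)) N ->
  N = mkM2 (Pf (wn^2) (2*zeta*wn) s) (Qf (wn^2) (2*zeta*wn) s)
           (- wn^2 * Qf (wn^2) (2*zeta*wn) s)
           (Pf (wn^2) (2*zeta*wn) s - 2*zeta*wn * Qf (wn^2) (2*zeta*wn) s).
Proof.
  intros [H1 [H2 [H3 H4]]].
  set (W := wn^2) in *. set (C := 2*zeta*wn) in *.
  assert (Lp : is_lim_seq (SS (pp W C) s) (Pf W C s)).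
  { apply is_lim_seq_Reals. apply SS_cv. apply CV_radius_inside. apply rad_p. }
  assert (Lq : is_lim_seq (SS (qq W C) s) (Qf W C s)).
  { apply is_lim_seq_Reals. apply SS_cv. apply CV_radius_inside. apply rad_q. }
  assert (Hf := expsum_form wn zeta s). simpl in Hf. fold W C in Hf.
  apply is_lim_seq_Reals in H1, H2, H3, H4.
  assert (U : forall (u : nat -> R) (l1 l2 : R), is_lim_seq u l1 -> is_lim_seq u l2 -> l1 = l2).
  { intros u l1 l2 Ha Hb. apply is_lim_seq_unique in Ha, Hb. rewrite Ha in Hb. now injection Hb. }
  destruct N as [n11 n12 n21 n22]. simpl in *. f_equal.
  - apply (U _ _ _ H1). eapply is_lim_seq_ext; [|exact Lp]. intro n. rewrite Hf. reflexivity.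
  - apply (U _ _ _ H2). eapply is_lim_seq_ext; [|exact Lq]. intro n. rewrite Hf. reflexivity.
  - apply (U _ _ _ H3). eapply is_lim_seq_ext;
      [|exact (is_lim_seq_mult' _ _ _ _ (is_lim_seq_const (- W)) Lq)].
    intro n. rewrite Hf. reflexivity.
  - apply (U _ _ _ H4). eapply is_lim_seq_ext;
      [|exact (is_lim_seq_minus' _ _ _ _ Lp (is_lim_seq_mult' _ _ _ _ (is_lim_seq_const C) Lq))].
    intro n. rewrite Hf. reflexivity.
Qed.

Lemma trace_id a b W C s t al : b <> 0 -> W = a^2 + b^2 -> C = -2 * a ->
  let N1 := mkM2 (Pc a b s) (Qc a b s) (- W * Qc a b s) (Pc a b s - C * Qc a b s) in
  let N2 := mkM2 (Pc a b t) (Qc a b t) (- W * Qc a b t) (Pc a b t - C * Qc a b t) in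
  M2tr (Jmat N1 N2 al) = M2tr (M2mul N2 N1) + al * (exp (a * (s + t)) * (sin (b * (s + t)) / b)).
Proof.
  intros Hb HW HC N1 N2. subst N1 N2 W C.
  unfold Jmat, M2tr, M2mul, Dmat, Pc, Qc; cbn [m11 m12 m21 m22].
  rewrite (Rmult_plus_distr_l a s t), (Rmult_plus_distr_l b s t), exp_plus, sin_plus.
  field. auto.
Qed.

Lemma det_id a b W C s : b <> 0 -> W = a^2 + b^2 -> C = -2 * a ->
  M2det (mkM2 (Pc a b s) (Qc a b s) (- W * Qc a b s) (Pc a b s - C * Qc a b s))
  = exp (2 * a * s).
Proof.
  intros Hb HW HC. subst W C.
  unfold M2det, Pc, Qc; cbn [m11 m12 m21 m22].
  replace (2 * a * s) with (a * s + a * s) by ring. rewrite exp_plus.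
  assert (Hsc := sin2_cos2 (b * s)). unfold Rsqr in Hsc.
  apply Rmult_eq_reg_r with (b^2). 2: { apply pow_nonzero; auto. }
  field_simplify; auto.
  replace (cos (b * s) ^ 2) with (1 - sin (b * s) ^ 2) by (simpl; lra). ring.
Qed.

Lemma det_J N1 N2 al : M2det (Jmat N1 N2 al) = M2det N2 * M2det N1.
Proof. destruct N1, N2. unfold M2det, Jmat, M2mul, Dmat; cbn. ring. Qed.

Theorem mainTheorem3 (wn zeta T s0 : R)
  (hwn : 0 < wn) (hz0 : 0 <= zeta) (hz1 : zeta < 1) (hT : 0 < T)
  (N1 N2 : M2)
  (hN1 : is_M2exp (M2scal s0 (sysA wn zeta)) N1)
  (hN2 : is_M2exp (M2scal (T - s0) (sysA wn zeta)) N2) :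
  let w0 := wn * sqrt (1 - zeta ^ 2) in
  let coef := exp (- zeta * wn * T) * (sin (w0 * T) / w0) in
  (forall alpha : R,
     M2tr (Jmat N1 N2 alpha) = M2tr (M2mul N2 N1) + alpha * coef /\
     M2det (Jmat N1 N2 alpha) = M2det N2 * M2det N1 /\
     M2det N2 * M2det N1 = exp (- 2 * zeta * wn * T)) /\
  (forall wf : R,
     T = 2 * PI / wf ->
     (forall m : Z, w0 <> IZR m * wf / 2) ->
     coef <> 0 /\
     (forall w2 h1 astar : R,
        w2 * h1 <> 0 -> 0 < astar ->
        let alpha := fun Hmin : R =>
          w2 * h1 * sqrt (2 * astar) / (2 * sqrt (- Hmin)) in
        (exists c : R, c <> 0 /\
           limit1_in (fun Hmin => M2tr (Jmat N1 N2 (alpha Hmin)) * sqrt (- Hmin))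
                     (fun Hmin => Hmin < 0) c 0) /\
        (forall Hmin : R, Hmin < 0 ->
           M2det (Jmat N1 N2 (alpha Hmin)) = exp (- 2 * zeta * wn * T)))).
Proof.
  intros w0 coef.
  set (a := - zeta * wn).
  assert (Hsq : 0 < sqrt (1 - zeta ^ 2)) by (apply sqrt_lt_R0; nra).
  assert (Hb : 0 < w0) by (unfold w0; nra).
  assert (Hb0 : w0 <> 0) by lra.
  assert (HW : wn ^ 2 = a ^ 2 + w0 ^ 2).
  { unfold a, w0. assert (Hs2 : sqrt (1 - zeta ^ 2) * sqrt (1 - zeta ^ 2) = 1 - zeta ^ 2)
      by (apply sqrt_sqrt; nra).
    replace ((wn * sqrt (1 - zeta ^ 2)) ^ 2) with (wn ^ 2 * (sqrt (1 - zeta ^ 2) * sqrt (1 - zeta ^ 2))) by ring.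
    rewrite Hs2. ring. }
  assert (HC : 2 * zeta * wn = -2 * a) by (unfold a; ring).
  assert (Hn1 := N_form _ _ _ _ hN1). assert (Hn2 := N_form _ _ _ _ hN2).
  destruct (closed_gen a w0 (wn^2) (2*zeta*wn) Hb0 HW HC s0) as [P1 Q1].
  destruct (closed_gen a w0 (wn^2) (2*zeta*wn) Hb0 HW HC (T - s0)) as [P2 Q2].
  rewrite P1, Q1 in Hn1. rewrite P2, Q2 in Hn2.
  assert (Htr : forall al, M2tr (Jmat N1 N2 al) = M2tr (M2mul N2 N1) + al * coef).
  { intro al. rewrite Hn1, Hn2. rewrite (trace_id a w0 (wn^2) (2*zeta*wn) s0 (T - s0) al Hb0 HW HC).
    unfold coef. replace (s0 + (T - s0)) with T by ring. unfold a. reflexivity. }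
  assert (Hdd : M2det N2 * M2det N1 = exp (- 2 * zeta * wn * T)).
  { rewrite Hn1, Hn2. rewrite !(det_id a w0 (wn^2) (2*zeta*wn)) by auto.
    rewrite <- exp_plus. f_equal. unfold a. ring. }
  split.
  { intro al. split; [apply Htr|]. split; [apply det_J|exact Hdd]. }
  intros wf HTw Hm.
  assert (Hcoef : coef <> 0).
  { unfold coef. intro H0. apply Rmult_integral in H0. destruct H0 as [H0|H0].
    - generalize (exp_pos (- zeta * wn * T)); lra.
    - assert (Hs : sin (w0 * T) = 0).
      { unfold Rdiv in H0. apply Rmult_integral in H0. destruct H0 as [H0|H0]; auto.
        exfalso. apply (Rinv_neq_0_compat w0 Hb0 H0). }
      apply sin_eq_0_0 in Hs. destruct Hs as [k Hk].
      assert (Hwf : wf <> 0).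
      { intro E0. rewrite E0 in HTw. unfold Rdiv in HTw. rewrite Rinv_0 in HTw. lra. }
      apply (Hm k).
      rewrite HTw in Hk.
      assert (Hk2 : w0 * 2 * PI = IZR k * PI * wf).
      { replace (w0 * 2 * PI) with (w0 * (2 * PI / wf) * wf) by (field; auto).
        rewrite Hk. ring. }
      assert (HPI := PI_RGT_0).
      assert (Hz : (w0 * 2 - IZR k * wf) * PI = 0) by lra.
      apply Rmult_integral in Hz. destruct Hz as [Hz|Hz]; [|lra].
      lra. }
  split; [exact Hcoef|].
  intros w2 h1 astar Hwh Ha alpha.
  split.
  - set (Tr0 := M2tr (M2mul N2 N1)).
    exists (w2 * h1 * sqrt (2 * astar) / 2 * coef). split.
    { assert (0 < sqrt (2 * astar)) by (apply sqrt_lt_R0; lra).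
      intro H0. apply Rmult_integral in H0. destruct H0 as [H0|H0]; [|auto].
      unfold Rdiv in H0. apply Rmult_integral in H0. destruct H0 as [H0|H0]; [|lra].
      apply Rmult_integral in H0. destruct H0 as [H0|H0]; [auto|lra]. }
    intros eps Heps.
    set (A := Rabs Tr0 + 1).
    assert (HA : 0 < A) by (unfold A; generalize (Rabs_pos Tr0); lra).
    exists ((eps / A) ^ 2). split.
    { apply pow_lt. apply Rdiv_lt_0_compat; lra. }
    intros x [Hx Hd]. simpl in Hd. unfold R_dist in Hd. rewrite Rminus_0_r in Hd.
    rewrite Rabs_left in Hd by lra.
    assert (Hsx : 0 < sqrt (- x)) by (apply sqrt_lt_R0; lra).
    assert (Hlt : sqrt (- x) < eps / A).
    { rewrite <- (sqrt_pow2 (eps / A)) by (left; apply Rdiv_lt_0_compat; lra).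
      apply sqrt_lt_1_alt. lra. }
    simpl. unfold R_dist. rewrite Htr. fold Tr0. unfold alpha.
    replace ((Tr0 + w2 * h1 * sqrt (2 * astar) / (2 * sqrt (- x)) * coef) * sqrt (- x) -
             w2 * h1 * sqrt (2 * astar) / 2 * coef) with (Tr0 * sqrt (- x)) by (field; lra).
    rewrite Rabs_mult, (Rabs_right (sqrt (- x))) by lra.
    apply Rle_lt_trans with (A * sqrt (- x)).
    { apply Rmult_le_compat_r; [lra|]. unfold A; lra. }
    replace eps with (A * (eps / A)) by (field; lra).
    apply Rmult_lt_compat_l; lra.
  - intros Hmin _. rewrite det_J. exact Hdd.
Qed.
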